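(* Let $K$ be a field and $X$ a finite connected poset. The center $Z$ of the Lie algebra $(J(I(X,K)),[\ ,\ ])$ is $$Z=\mathrm{span}_K\{e_{xy}: x<y,\ x\text{ is minimal in }X\text{ and } y \text{ is maximal in }X\}.$$
   Context: $I(X,K)$ is the incidence algebra: functions $f:X\times X\to K$ with $f(x,y)=0$ unless $x\le y$, product $(fg)(x,y)=\sum_{x\le t\le y}f(x,t)g(t,y)$; $e_{xy}$ ($x\le y$) is the function equal to $1$ at $(x,y)$ and $0$ elsewhere. $J(I(X,K))=\mathrm{span}_K\{e_{xy}:x<y\}$ is the Jacobson radical, and $[f,g]=fg-gf$. Connected means any two elements are joined by a sequence in which consecutive elements are in a covering relation. *)

(* Defs.v *)
From HB Require Import structures.
From mathcomp Require Import all_boot all_order all_algebra.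
Set Implicit Arguments. Unset Strict Implicit. Unset Printing Implicit Defensive.
Import Order.Theory GRing.Theory.
Local Open Scope ring_scope.

Definition incidence {d} {X : finPOrderType d} {K : fieldType}
  (f : X -> X -> K) : Prop := forall x y, ~~ (x <= y)%O -> f x y = 0.

Definition imul {d} {X : finPOrderType d} {K : fieldType}
  (f g : X -> X -> K) : X -> X -> K :=
  fun x y => \sum_(t : X | (x <= t)%O && (t <= y)%O) f x t * g t y.

Definition ibracket {d} {X : finPOrderType d} {K : fieldType}
  (f g : X -> X -> K) : X -> X -> K :=
  fun x y => imul f g x y - imul g f x y.

Definition ebasis {d} {X : finPOrderType d} {K : fieldType}
  (u v : X) : X -> X -> K :=
  fun x y => if (x == u) && (y == v) then 1 else 0.

Definition in_span {d} {X : finPOrderType d} {K : fieldType}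
  (P : X -> X -> bool) (f : X -> X -> K) : Prop :=
  exists c : X -> X -> K, forall x y,
    f x y = \sum_(u : X) \sum_(v : X | P u v) c u v * ebasis u v x y.

Definition jacobson {d} {X : finPOrderType d} {K : fieldType}
  (f : X -> X -> K) : Prop := in_span (fun u v : X => (u < v)%O) f.

Definition lie_center {d} {X : finPOrderType d} {K : fieldType}
  (f : X -> X -> K) : Prop :=
  jacobson f /\ forall g : X -> X -> K, jacobson g ->
    forall x y, ibracket f g x y = 0.

Definition minimal {d} {X : finPOrderType d} (x : X) : bool :=
  [forall z : X, ~~ (z < x)%O].
Definition maximal {d} {X : finPOrderType d} (x : X) : bool :=
  [forall z : X, ~~ (x < z)%O].

Definition covers {d} {X : finPOrderType d} (x y : X) : bool :=
  (x < y)%O && [forall z : X, ~~ ((x < z)%O && (z < y)%O)].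

Definition connected_poset {d} (X : finPOrderType d) : Prop :=
  forall a b : X, exists s : seq X,
    path (fun u v : X => covers u v || covers v u) a s /\ last a s = b.

(* Main.v *)
Require Import Defs.
From mathcomp Require Import all_boot all_order all_algebra.
Import Order.Theory GRing.Theory.
Local Open Scope ring_scope.

Lemma sum_ebasis (K : fieldType) d (X : finPOrderType d) (P : X -> X -> bool)
  (c : X -> X -> K) x y :
  \sum_(u : X) \sum_(v : X | P u v) c u v * ebasis u v x y =
  if P x y then c x y else 0.
Proof.
rewrite (bigD1 x) //= [X in _ + X]big1 ?addr0; last first.
  move=> u; rewrite ?andTb => /negbTE ux; apply: big1 => v _.
  by rewrite /ebasis (eq_sym x) ux mulr0.
case: ifP => Pxy.
  rewrite (bigD1 y) //= [X in _ + X]big1 ?addr0 /ebasis ?eqxx ?mulr1 //.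
  by move=> v /andP [_ /negbTE vy]; rewrite (eq_sym y) vy mulr0.
apply: big1 => v Pv; rewrite /ebasis eqxx /=.
case: eqP => [yv|_]; last by rewrite mulr0.
by subst; rewrite Pv in Pxy.
Qed.

Lemma in_spanE (K : fieldType) d (X : finPOrderType d) (P : X -> X -> bool)
  (f : X -> X -> K) :
  in_span P f <-> forall x y, ~~ P x y -> f x y = 0.
Proof.
split.
  by move=> [c hc] x y nP; rewrite hc sum_ebasis (negbTE nP).
move=> H; exists f => x y; rewrite sum_ebasis.
by case: ifP => // /negbT /H.
Qed.

Theorem proposition2p5 (K : fieldType) (d : Order.disp_t) (X : finPOrderType d) :
  connected_poset X ->
  forall f : X -> X -> K,
    lie_center f <->
    in_span (fun u v : X => [&& (u < v)%O, minimal u & maximal v]) f.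
Proof.
move=> _ f; split.
  move=> [/in_spanE hf hc]; apply/in_spanE => x y.
  case: (boolP (x < y)%O) => [xy|nxy]; last by move=> _; apply: hf.
  rewrite /=.
  case: (boolP (minimal x)) => [mx|] /=.
    move=> /forallPn [z]; rewrite negbK => yz.
    have hg : jacobson (ebasis y z : X -> X -> K).
      apply/in_spanE => u v; rewrite /ebasis.
      by case: eqP => [->|//]; case: eqP => [->|//]; rewrite yz.
    have := hc _ hg x z; rewrite /ibracket /imul.
    rewrite (bigD1 y) /=; last by rewrite (ltW xy) (ltW yz).
    rewrite big1; last first.
      by move=> t /andP [_ /negbTE ty]; rewrite /ebasis ty mulr0.
    rewrite big1; last first.
      move=> t _; rewrite /ebasis.
      case: eqP => [xy'|]; last by rewrite mul0r.
      by subst; rewrite ltxx in xy.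
    by rewrite /ebasis !eqxx mulr1 addr0 subr0.
  move=> /forallPn [z]; rewrite negbK => zx _.
  have hg : jacobson (ebasis z x : X -> X -> K).
    apply/in_spanE => u v; rewrite /ebasis.
    by case: eqP => [->|//]; case: eqP => [->|//]; rewrite zx.
  have := hc _ hg z y; rewrite /ibracket /imul.
  rewrite [X in X - _]big1; last first.
    move=> t _; rewrite /ebasis.
    case: (y =P x) => [yx|]; first by subst; rewrite ltxx in xy.
    by rewrite andbF mulr0.
  rewrite (bigD1 x) /=; last by rewrite (ltW xy) (ltW zx).
  rewrite big1; last first.
    by move=> t /andP [_ /negbTE tx]; rewrite /ebasis tx andbF mul0r.
  by rewrite /ebasis !eqxx mul1r addr0 sub0r => /eqP; rewrite oppr_eq0 => /eqP.
move/in_spanE => hf; split.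
  apply/in_spanE => x y nxy; apply: hf; by rewrite (negbTE nxy).
move=> g /in_spanE hg x y; rewrite /ibracket /imul.
rewrite big1 ?sub0r; last first.
  move=> t _; case: (boolP [&& (x < t)%O, minimal x & maximal t]) => H.
    case/and3P: H => _ _ mt.
    rewrite (hg t y) ?mulr0 //.
    by move/forallP: mt.
  by rewrite (hf x t H) mul0r.
rewrite big1 ?oppr0 //.
move=> t _; case: (boolP [&& (t < y)%O, minimal t & maximal y]) => H.
  case/and3P: H => _ mt _.
  rewrite (hg x t) ?mul0r //.
  by move/forallP: mt.
by rewrite (hf t y H) mulr0.
Qed.
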